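(* 1) Assume $\Delta$ is of type $SL_n$ and let $u\in GL_n(R)$. Then for every $v\in G_u$ we have $\delta(\det(v))=0$. 2) Assume $\Delta$ is of type $SO(q)$ and let $u\in SO(q)$. Then for every $v\in G_u$ we have $\delta(v^tqv)=0$.
   Context: Let $p$ be an odd prime, $R$ the unique complete discrete valuation ring with maximal ideal $pR$ and residue field an algebraic closure of $\mathbb F_p$; $\phi$ the unique lift of Frobenius, $\delta a=(\phi(a)-a^p)/p$; on matrices $\phi,\delta$ act entrywise, $u^{(p)}=(u_{ij}^p)$. $x$ an $n\times n$ matrix of indeterminates, $A=R[x,\det(x)^{-1}]^\wedge$. For $\Delta\in\mathfrak{gl}_n(A)$, $\Phi(x)=x^{(p)}+p\Delta(x)$, and for $u\in GL_n(R)$, $G_u=\{v\in GL_n(R):\phi(v)=\Phi(u)^{-1}\Phi(uv)\}$. Type $SL_n$: $p\nmid n$, $\Delta(x)=\frac{\lambda(x)-1}{p}x^{(p)}$, $\lambda(x)=(\det(x^{(p)})/\det(x)^p)^{-1/n}$ via the binomial series $(1+pt)^a$, $a\in\mathbb Z_p$. Type $SO(q)$: $q$ one of $\begin{pmatrix}0&1_r\\-1_r&0\end{pmatrix}$, $\begin{pmatrix}0&1_r\\1_r&0\end{pmatrix}$ ($n=2r$), $\begin{pmatrix}1&0&0\\0&0&1_r\\0&1_r&0\end{pmatrix}$ ($n=2r+1$); $SO(q)$ the identity component of $\{x^tqx=q\}$; $\Lambda(x)=(((x^{(p)})^tqx^{(p)})^{-1}(x^tqx)^{(p)})^{1/2}$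 via the binomial series; $\Delta(x)=x^{(p)}\frac{\Lambda(x)-1}{p}$. *)

(* Defs.v *)
From HB Require Import structures.
From mathcomp Require Import all_boot all_order all_algebra.
From Stdlib Require Import ClassicalEpsilon.
Set Implicit Arguments. Unset Strict Implicit. Unset Printing Implicit Defensive.
Import Order.TTheory GRing.Theory Num.Theory.
Local Open Scope ring_scope.

Section Defs.
Variable R : idomainType.
Variable p : nat.

Definition dvdR (a b : R) : Prop := exists c, b = a * c.

Definition padic_lim (s : nat -> R) (L : R) : Prop :=
  forall k : nat, exists N : nat, forall m, (N <= m)%N -> dvdR (p%:R ^+ k) (s m - L).
Definition padic_cauchy (s : nat -> R) : Prop :=
  forall k : nat, exists N : nat, forall m m', (N <= m)%N -> (N <= m')%N ->
    dvdR (p%:R ^+ k) (s m - s m').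
Definition padic_lim_mx n (s : nat -> 'M[R]_n) (L : 'M[R]_n) : Prop :=
  forall i j, padic_lim (fun m => s m i j) (L i j).

(** R is the complete DVR with maximal ideal pR and residue field an algebraic
    closure of F_p (p an odd prime), and phi is a lift of Frobenius. *)
Record W_setting (phi : R -> R) : Prop := {
  p_prime : prime p;
  p_odd : odd p;
  p_neq0 : p%:R != 0 :> R;
  p_nonunit : (p%:R : R) \isn't a GRing.unit;
  nonunit_dvd : forall x : R, x \isn't a GRing.unit -> dvdR p%:R x;
  separated : forall x : R, (forall k, dvdR (p%:R ^+ k) x) -> x = 0;
  complete : forall s, padic_cauchy s -> exists L, padic_lim s L;
  residue_closed : forall P : {poly R}, P \is monic -> (1 < size P)%N ->
    exists r, dvdR p%:R P.[r];
  residue_algebraic : forall x : R, exists m, (0 < m)%N /\ dvdR p%:R (x ^+ (p ^ m) - x);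
  frob_lift : forall a, dvdR p%:R (phi a - a ^+ p) }.

Definition divp (a : R) : R := epsilon (inhabits 0) (fun c => a = p%:R * c).

Definition delta (phi : R -> R) (a : R) : R := divp (phi a - a ^+ p).

Definition frobp n (x : 'M[R]_n) : 'M[R]_n := map_mx (fun a => a ^+ p) x.

Definition binom_coef (a : rat) (j : nat) : rat :=
  (\prod_(i < j) (a - i%:R)) / (j`!)%:R.

(** (1 + p t)^a := sum_j binom(a,j) (p t)^j  (p-adic limit), evaluated at y = 1 + p t *)
Definition binom_terms (a : rat) (y : R) : nat -> R :=
  fun m => \sum_(j < m) ratr (binom_coef a j) * (y - 1) ^+ j.
Definition binom_pow (a : rat) (y : R) : R :=
  epsilon (inhabits 0) (fun L => padic_lim (binom_terms a y) L).

Definition binom_terms_mx n (a : rat) (Y : 'M[R]_n) : nat -> 'M[R]_n :=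
  fun m => \sum_(j < m) ratr (binom_coef a j) *: (Y - 1%:M) ^+ j.
Definition binom_pow_mx n (a : rat) (Y : 'M[R]_n) : 'M[R]_n :=
  epsilon (inhabits 0) (fun L => padic_lim_mx (binom_terms_mx a Y) L).

Definition lambdaSL n (x : 'M[R]_n) : R :=
  binom_pow (- (n%:Q)^-1) (\det (frobp x) / (\det x) ^+ p).
Definition DeltaSL n (x : 'M[R]_n) : 'M[R]_n :=
  divp (lambdaSL x - 1) *: frobp x.
Definition PhiSL n (x : 'M[R]_n) : 'M[R]_n := frobp x + p%:R *: DeltaSL x.

Definition LambdaSO n (q x : 'M[R]_n) : 'M[R]_n :=
  binom_pow_mx (1 / 2%:R)
    (invmx ((frobp x)^T *m q *m frobp x) *m frobp (x^T *m q *m x)).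
Definition DeltaSO n (q x : 'M[R]_n) : 'M[R]_n :=
  frobp x *m map_mx divp (LambdaSO q x - 1%:M).
Definition PhiSO n (q x : 'M[R]_n) : 'M[R]_n := frobp x + p%:R *: DeltaSO q x.

Definition inG n (Phi : 'M[R]_n -> 'M[R]_n) (phi : R -> R) (u v : 'M[R]_n) : Prop :=
  v \in unitmx /\ map_mx phi v = invmx (Phi u) *m Phi (u *m v).

Definition q_alt r : 'M[R]_(r + r) := block_mx 0 1%:M (- 1%:M) 0.
Definition q_sym r : 'M[R]_(r + r) := block_mx 0 1%:M 1%:M 0.
Definition q_odd r : 'M[R]_(1 + (r + r)) := block_mx 1%:M 0 0 (q_sym r).

End Defs.

(* Main.v *)
From Pilot Require Import Defs.
From HB Require Import structures.
From mathcomp Require Import all_boot all_order all_algebra.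
From mathcomp Require Import fingroup perm.
From mathcomp Require Import ring lra zify.
From Stdlib Require Import ClassicalEpsilon.
Set Implicit Arguments. Unset Strict Implicit. Unset Printing Implicit Defensive.
Import Order.TTheory GRing.Theory Num.Theory.
Local Open Scope ring_scope.

Section Basics.
Variable R : idomainType.
Variable p : nat.
Variable phi : R -> R.
Hypothesis HW : W_setting p phi.

Local Notation P := (p%:R : R).
Local Notation dv := (@dvdR R).
Local Notation divP := Pilot.Defs.divp.

Lemma dv0 a : dv a 0. Proof. by exists 0; rewrite mulr0. Qed.
Lemma dvD a x y : dv a x -> dv a y -> dv a (x + y).
Proof. by move=> [c ->] [d ->]; exists (c + d); rewrite mulrDr. Qed.
Lemma dvN a x : dv a x -> dv a (- x).
Proof. by move=> [c ->]; exists (- c); rewrite mulrN. Qed.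
Lemma dvB a x y : dv a x -> dv a y -> dv a (x - y).
Proof. by move=> hx hy; apply: dvD => //; apply: dvN. Qed.
Lemma dvMr a x y : dv a x -> dv a (x * y).
Proof. by move=> [c ->]; exists (c * y); rewrite mulrA. Qed.
Lemma dvMl a x y : dv a x -> dv a (y * x).
Proof. by move=> h; rewrite mulrC; apply: dvMr. Qed.
Lemma dvMM a b x y : dv a x -> dv b y -> dv (a * b) (x * y).
Proof. by move=> [c ->] [d ->]; exists (c * d); rewrite mulrACA. Qed.
Lemma dv_refl a : dv a a. Proof. by exists 1; rewrite mulr1. Qed.
Lemma dv_trans a b x : dv a b -> dv b x -> dv a x.
Proof. by move=> [c ->] [d ->]; exists (c * d); rewrite mulrA. Qed.
Lemma dv_sum a I (r : seq I) (Q : pred I) (F : I -> R) :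
  (forall i, Q i -> dv a (F i)) -> dv a (\sum_(i <- r | Q i) F i).
Proof. by move=> h; apply: big_ind => //; [apply: dv0|apply: dvD]. Qed.
Lemma dvX_le k l x : (k <= l)%N -> dv (P ^+ l) x -> dv (P ^+ k) x.
Proof.
move=> kl; apply: dv_trans; exists (P ^+ (l - k)).
by rewrite -exprD subnKC.
Qed.
Lemma dvnat (m : nat) : (p %| m)%N -> dv P (m%:R : R).
Proof. by move=> /dvdnP [c ->]; exists c%:R; rewrite natrM mulrC. Qed.

Lemma P_neq0 : P != 0. Proof. exact: (p_neq0 HW). Qed.
Lemma P_nonunit : P \isn't a GRing.unit. Proof. exact: (p_nonunit HW). Qed.
Lemma pprime : prime p. Proof. exact: (p_prime HW). Qed.
Lemma podd : odd p. Proof. exact: (p_odd HW). Qed.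
Lemma nonunit_dv x : x \isn't a GRing.unit -> dv P x. Proof. exact: (nonunit_dvd HW). Qed.
Lemma sep x : (forall k, dv (P ^+ k) x) -> x = 0. Proof. exact: (separated HW). Qed.

Lemma unit_dvP a b : a \is a GRing.unit -> dv P (b - a) -> b \is a GRing.unit.
Proof.
move=> ua hb; apply/negPn/negP => /nonunit_dv hb'.
have e : a = b - (b - a) by ring.
have : dv P a by rewrite e; apply: dvB.
move=> [c hc]; move/negP: P_nonunit; apply.
apply/unitrPr; exists (c * a^-1); by rewrite mulrA -hc mulrV.
Qed.

Lemma divpP a : dv P a -> a = P * divP p a.
Proof.
move=> h; rewrite /divP; case: h => c hc.
by apply: (epsilon_spec (inhabits 0) (fun c => a = P * c)); exists c.
Qed.
Lemma divp0 : divP p (0 : R) = 0.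
Proof.
have := divpP (dv0 P); move/esym/eqP; rewrite mulf_eq0 (negPf P_neq0) /=.
by move/eqP.
Qed.

Lemma frobD (a b : R) : dv P ((a + b) ^+ p - (a ^+ p + b ^+ p)).
Proof.
have p0 : (0 < p)%N by rewrite prime_gt0 // pprime.
rewrite exprDn; move: p0; case E: p => [//|q] _.
rewrite big_ord_recr big_ord_recl /= !subnn subn0 expr0 mulr1 mul1r !bin0 binn !mulr1n.
set S := \sum_(i < q) _.
have -> : a ^+ q.+1 + S + b ^+ q.+1 - (a ^+ q.+1 + b ^+ q.+1) = S by ring.
rewrite {}/S.
apply: dv_sum => i _; rewrite -[_ *+ 'C(_,_)]mulr_natr -E; apply: dvMl; apply: dvnat.
rewrite prime_dvd_bin ?pprime // E /=.
by rewrite ltnS ltn_ord.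
Qed.

Lemma p_gt0 : (0 < p)%N. Proof. by rewrite prime_gt0 // pprime. Qed.

Lemma frob_sum I (r : seq I) (Q : pred I) (F : I -> R) :
  dv P ((\sum_(i <- r | Q i) F i) ^+ p - \sum_(i <- r | Q i) F i ^+ p).
Proof.
apply: (big_rec2 (fun x y => dv P (x ^+ p - y))).
  by rewrite expr0n /= (negPf (lt0n_neq0 p_gt0)) subrr; apply: dv0.
move=> i y1 y2 _ h.
have -> : (F i + y1) ^+ p - (F i ^+ p + y2) =
  ((F i + y1) ^+ p - (F i ^+ p + y1 ^+ p)) + (y1 ^+ p - y2) by ring.
by apply: dvD => //; apply: frobD.
Qed.

Lemma signp (b : bool) : ((-1) ^+ b : R) ^+ p = (-1) ^+ b.
Proof. by rewrite -exprM mulnC exprM -(signr_odd _ p) podd expr1. Qed.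

Lemma frob_det n (x : 'M[R]_n) :
  dv P (\det (frobp p x) - (\det x) ^+ p).
Proof.
rewrite -opprB; apply: dvN.
have -> : \det (frobp p x) =
  \sum_(s : 'S_n) ((-1) ^+ s * \prod_i x i (s i)) ^+ p.
  rewrite /determinant; apply: eq_bigr => s _; rewrite exprMn signp -prodrXl.
  by congr (_ * _); apply: eq_bigr => i _; rewrite /frobp mxE.
exact: frob_sum.
Qed.


Definition good (x : rat) := ~~ (p %| `|denq x|)%N.

Lemma int_unit (z : int) : ~~ (p %| `|z|)%N -> (z%:~R : R) \is a GRing.unit.
Proof.
move=> hz; apply/negPn/negP => /nonunit_dv [c hc].
have cop : coprime p `|z| by rewrite prime_coprime // pprime.
have [u [v huv]] := Bezoutz p%:Z z.
have g1 : gcdz p%:Z z = 1 by rewrite /gcdz /=; move/eqP: cop => ->.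
rewrite g1 in huv.
have : ((u * p%:Z + v * z)%:~R : R) = 1 by rewrite huv.
rewrite intrD !intrM hc /= => h.
move/negP: P_nonunit; apply; apply/unitrPr; exists (u%:~R + v%:~R * c).
rewrite -[in RHS]h -[(p%:Z)%:~R]pmulrn; ring.
Qed.

Lemma unitfrac (u w a b : R) : u \is a GRing.unit -> w \is a GRing.unit ->
  (a * w + b * u) / (u * w) = a / u + b / w.
Proof.
move=> hu hw; rewrite invrM // mulrDl.
congr (_ + _).
  by rewrite mulrA -(mulrA a w) mulrV // mulr1.
by rewrite [w^-1 * _]mulrC mulrA -(mulrA b u) mulrV // mulr1.
Qed.

Lemma unitfracM (u w a b : R) : u \is a GRing.unit -> w \is a GRing.unit ->
  (a * b) / (u * w) = a / u * (b / w).
Proof.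
move=> hu hw; rewrite invrM // [w^-1 * _]mulrC; ring.
Qed.

Lemma den_dvd (x : rat) (n d : int) : x * d%:~R = n%:~R -> (`|denq x| %| `|d|)%N.
Proof.
move=> h.
have e : numq x * d = n * denq x.
  apply: (@intr_inj rat); rewrite !intrM numqE -h; ring.
have : (`|denq x| %| `|numq x| * `|d|)%N.
  by rewrite -abszM e abszM dvdn_mull.
by rewrite Gauss_dvdr // coprime_sym coprime_num_den.
Qed.

Lemma ratr_frac (x : rat) (n d : int) : ~~ (p %| `|d|)%N ->
  x * d%:~R = n%:~R -> good x /\ ratr x = n%:~R / d%:~R :> R.
Proof.
move=> hd h; have hD := den_dvd h.
have gx : good x.
  by apply/negP => /dvdn_trans /(_ hD); apply/negP.
split => //.
have e : numq x * d = n * denq x.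
  apply: (@intr_inj rat); rewrite !intrM numqE -h; ring.
have ud := int_unit hd.
have uD := int_unit gx.
rewrite /ratr.
apply: (mulIr ud); rewrite divrK //.
rewrite mulrAC; apply: (mulIr uD); rewrite divrK //.
by rewrite -!intrM e.
Qed.

Lemma pndvdM (a b : int) : ~~ (p %| `|a|)%N -> ~~ (p %| `|b|)%N -> ~~ (p %| `|(a * b)%R|)%N.
Proof. by move=> ha hb; rewrite abszM Euclid_dvdM ?pprime // negb_or ha hb. Qed.

Lemma good_add x y : good x -> good y -> good (x + y) /\ ratr (x + y) = ratr x + ratr y :> R.
Proof.
move=> gx gy.
have [g e] := @ratr_frac (x + y) (numq x * denq y + numq y * denq x) (denq x * denq y)
  (pndvdM gx gy) ltac:(by rewrite !intrD !intrM !numqE; ring).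
split => //; rewrite e intrD !intrM unitfrac //; exact: int_unit.
Qed.

Lemma good_mul x y : good x -> good y -> good (x * y) /\ ratr (x * y) = ratr x * ratr y :> R.
Proof.
move=> gx gy.
have [g e] := @ratr_frac (x * y) (numq x * numq y) (denq x * denq y)
  (pndvdM gx gy) ltac:(by rewrite !intrM !numqE; ring).
split => //; rewrite e !intrM unitfracM //; exact: int_unit.
Qed.

Lemma good_int (z : int) : good z%:~R.
Proof. by rewrite /good denq_int /= dvdn1; apply/eqP => p1; move: pprime; rewrite p1. Qed.

Lemma good_opp x : good x -> good (- x).
Proof. by rewrite /good denqN. Qed.

Lemma good_sum (I : Type) (r : seq I) (Q : pred I) (F : I -> rat) :
  (forall i, Q i -> good (F i)) ->
  good (\sum_(i <- r | Q i) F i) /\ ratr (\sum_(i <- r | Q i) F i) = \sum_(i <- r | Q i) ratr (F i) :> R.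
Proof.
move=> h; apply: (big_ind2 (fun x y => good x /\ ratr x = y)).
- split; first exact: (good_int 0).
  by rewrite /ratr /= mul0r.
- move=> x1 x2 y1 y2 [g1 e1] [g2 e2]; have [g e] := good_add g1 g2.
  by split => //; rewrite e e1 e2.
- by move=> i qi; split => //; apply: h.
Qed.

Lemma prod_cong (K : int) j (f g : nat -> int) : (forall i, (K %| f i - g i)%Z) ->
  (K %| \prod_(i < j) f i - \prod_(i < j) g i)%Z.
Proof.
move=> h; elim: j => [|j ih]; first by rewrite !big_ord0 subrr dvdz0.
rewrite !big_ord_recr /=.
have -> : (\prod_(i < j) f i) * f j - (\prod_(i < j) g i) * g j =
  (\prod_(i < j) f i - \prod_(i < j) g i) * f j + (\prod_(i < j) g i) * (f j - g j) by ring.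
by apply: rpredD; [apply: dvdz_mulr|apply: dvdz_mull].
Qed.

Lemma prod_ffact n0 j : (j <= n0)%N -> \prod_(i < j) (n0%:Z - i%:Z) = (n0 ^_ j)%:Z.
Proof.
elim: j => [|j ih] hj; first by rewrite big_ord0.
rewrite big_ord_recr /= ih ?(ltnW hj) // ffactnSr PoszM subzn //.
exact: ltnW.
Qed.

Lemma binom_int_dvd (u d : int) j : ~~ (p %| `|d|)%N ->
  ((p ^ logn p j`!)%:Z %| \prod_(i < j) (u - i%:Z * d))%Z.
Proof.
move=> hd; set K := (p ^ logn p j`!)%:Z.
have cop : coprimez d K.
  rewrite coprimezE /= coprime_sym; apply: coprimeXl.
  by rewrite prime_coprime ?pprime.
have [s [t hst]] := Bezoutz d K.
move/eqP: cop => cop; rewrite cop in hst.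
set N0 := s * u.
set N := N0 + K * (`|N0|%:Z + j%:Z).
have Kpos : (1 <= K)%R.
  by rewrite /K lez_nat expn_gt0 prime_gt0 ?pprime.
have Nj : (j%:Z <= N)%R.
  rewrite /N; have h1 : (- `|N0|%:Z <= N0)%R.
    by lia.
  have h2 : (`|N0|%:Z + j%:Z <= K * (`|N0|%:Z + j%:Z))%R.
    by rewrite ler_peMl // addr_ge0.
  lia.
have N0' : (0 <= N)%R by apply: le_trans Nj.
set n0 := `|N|%N.
have eN : N = n0%:Z by rewrite /n0 gez0_abs.
have jn0 : (j <= n0)%N by rewrite -lez_nat -eN.
have step1 : (K %| \prod_(i < j) (u - i%:Z * d) - \prod_(i < j) (d * N - i%:Z * d))%Z.
  apply: (@prod_cong K j (fun i : nat => u - i%:Z * d) (fun i : nat => d * N - i%:Z * d)) => i.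
  have -> : u - i%:Z * d - (d * N - i%:Z * d) = K * (u * t - d * (`|N0|%:Z + j%:Z)).
    have e : u = u * (s * d + t * K) by rewrite hst mulr1.
    rewrite /N /N0 {1}e; ring.
  exact: dvdz_mulr.
have step2 : (K %| \prod_(i < j) (d * N - i%:Z * d))%Z.
  have -> : \prod_(i < j) (d * N - i%:Z * d) = d ^+ j * \prod_(i < j) (N - i%:Z).
    transitivity (\prod_(i < j) (d * (N - i%:Z))).
      by apply: eq_bigr => i _; ring.
    by rewrite big_split /= prodr_const card_ord.
  apply: dvdz_mull; rewrite eN prod_ffact // -bin_ffact dvdzE /=.
  by apply: dvdn_mull; apply: pfactor_dvdnn.
have -> : \prod_(i < j) (u - i%:Z * d) =
  (\prod_(i < j) (u - i%:Z * d) - \prod_(i < j) (d * N - i%:Z * d)) +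
  \prod_(i < j) (d * N - i%:Z * d) by rewrite subrK.
exact: rpredD.
Qed.

Lemma good_binom a j : good a -> good (binom_coef a j).
Proof.
move=> ga.
have [m cpm ejf] := pfactor_coprime pprime (fact_gt0 j).
set v := logn p j`! in ejf.
have /dvdzP [Q eQ] := binom_int_dvd (numq a) j ga.
have hd : ~~ (p %| `|(denq a ^+ j * m%:Z)%R|)%N.
  apply: pndvdM.
    by rewrite abszX Euclid_dvdX ?pprime // negb_and; move: ga; rewrite /good => ->.
  by rewrite /= -prime_coprime ?pprime.
suff e : binom_coef a j * (denq a ^+ j * m%:Z)%:~R = Q%:~R by case: (ratr_frac hd e).
have e1 : (\prod_(i < j) (a - i%:R)) * (denq a)%:~R ^+ j =
    (\prod_(i < j) (numq a - i%:Z * denq a))%:~R.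
  transitivity (\prod_(i < j) ((a - i%:R) * (denq a)%:~R)).
    by rewrite big_split /= prodr_const card_ord.
  rewrite rmorph_prod /=.
  by apply: eq_bigr => i _; rewrite intrB intrM numqE /=; ring.
rewrite eQ in e1.
rewrite /binom_coef intrM rmorphXn /= ejf.
have hm : (m%:R : rat) != 0.
  by rewrite pnatr_eq0; apply/eqP => m0; move: cpm; rewrite m0 /coprime gcdn0 => /eqP p1;
    move: pprime; rewrite p1.
have hK : ((p ^ v)%:R : rat) != 0 by rewrite pnatr_eq0 expn_eq0 negb_and -lt0n (prime_gt0 pprime).
move: e1; rewrite intrM /= => e1.
have cz : forall k : nat, ((k%:Z)%:~R : rat) = k%:R by move=> k; rewrite -pmulrn.
rewrite !cz in e1 *; rewrite natrM -/v in hK *.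
rewrite -/v in e1.
set X := \prod_(i < j) _.
set D := (denq a)%:~R.
have -> : X / (m%:R * (p ^ v)%:R) * (D ^+ j * m%:R) = (X * D ^+ j) * m%:R / (m%:R * (p ^ v)%:R) by ring.
rewrite e1.
by field; apply/andP.
Qed.


Lemma bc0 a : binom_coef a 0 = 1.
Proof. by rewrite /binom_coef big_ord0 divr1. Qed.

Lemma fact_neq0 j : (j`!%:R : rat) != 0.
Proof. by rewrite pnatr_eq0 -lt0n fact_gt0. Qed.

Lemma bcS a j : binom_coef a j.+1 * j.+1%:R = binom_coef a j * (a - j%:R).
Proof.
rewrite /binom_coef big_ord_recr /= factS natrM.
have h1 := fact_neq0 j.
have h2 : (j.+1%:R : rat) != 0 by rewrite pnatr_eq0.
have h3 : (1 + j%:R : rat) != 0 by rewrite addrC natr1 pnatr_eq0.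
by field; rewrite h1 h3.
Qed.

Lemma vand_rec a b k :
  (\sum_(i < k.+2) binom_coef a i * binom_coef b (k.+1 - i)%N) * k.+1%:R =
  (\sum_(i < k.+1) binom_coef a i * binom_coef b (k - i)%N) * (a + b - k%:R).
Proof.
have e : forall i : 'I_k.+2, binom_coef a i * binom_coef b (k.+1 - i)%N * k.+1%:R =
   binom_coef a i * binom_coef b (k.+1 - i)%N * i%:R + binom_coef a i * binom_coef b (k.+1 - i)%N * (k.+1 - i)%N%:R.
  move=> i; rewrite -mulrDr -natrD subnKC //.
  by rewrite -ltnS ltn_ord.
rewrite mulr_suml (eq_bigr _ (fun i _ => e i)) big_split /=.
rewrite big_ord_recl /= mulr0 add0r.
rewrite [X in _ + X = _]big_ord_recr /= subnn mulr0 addr0.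
rewrite mulr_suml -big_split /=.
apply: eq_bigr => i _.
rewrite /= /bump leq0n add1n subSS.
have -> : binom_coef a i.+1 * binom_coef b (k - i)%N * i.+1%:R = binom_coef a i * (a - i%:R) * binom_coef b (k - i)%N.
  by rewrite mulrAC bcS.
have hi : (i <= k)%N by rewrite -ltnS ltn_ord.
rewrite subSn // -[X in _ + X = _]mulrA bcS natrB //.
ring.
Qed.

Lemma vandermonde a b k :
  binom_coef (a + b) k = \sum_(i < k.+1) binom_coef a i * binom_coef b (k - i)%N.
Proof.
elim: k => [|k ih].
  by rewrite big_ord1 !bc0 mulr1.
have h2 : (k.+1%:R : rat) != 0 by rewrite pnatr_eq0.
apply: (mulIf h2); rewrite vand_rec bcS ih.
done.
Qed.

Lemma zsub3 (V : zmodType) (x a b : V) : a - b = (x - b) - (x - a).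
Proof. by rewrite [RHS]addrC opprB addrA subrK. Qed.

Lemma tele (V : zmodType) (x y z : V) : (x - y) + (y - z) = x - z.
Proof. by rewrite addrA subrK. Qed.

Definition mdv n k (X : 'M[R]_n) := forall i j, dv (P ^+ k) (X i j).

Lemma mdv0 n k : mdv k (0 : 'M[R]_n). Proof. by move=> i j; rewrite mxE; apply: dv0. Qed.
Lemma mdvD n k (X Y : 'M[R]_n) : mdv k X -> mdv k Y -> mdv k (X + Y).
Proof. by move=> hX hY i j; rewrite mxE; apply: dvD. Qed.
Lemma mdvN n k (X : 'M[R]_n) : mdv k X -> mdv k (- X).
Proof. by move=> hX i j; rewrite mxE; apply: dvN. Qed.
Lemma mdvB n k (X Y : 'M[R]_n) : mdv k X -> mdv k Y -> mdv k (X - Y).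
Proof. by move=> hX hY; apply: mdvD => //; apply: mdvN. Qed.
Lemma mdv_le n k l (X : 'M[R]_n) : (k <= l)%N -> mdv l X -> mdv k X.
Proof. by move=> kl h i j; apply: dvX_le kl _. Qed.
Lemma mdvZ n k c (X : 'M[R]_n) : mdv k X -> mdv k (c *: X).
Proof. by move=> h i j; rewrite mxE; apply: dvMl. Qed.
Lemma mdv_sum n k I (r : seq I) (Q : pred I) (F : I -> 'M[R]_n) :
  (forall i, Q i -> mdv k (F i)) -> mdv k (\sum_(i <- r | Q i) F i).
Proof. by move=> h; apply: big_ind => //; [apply: mdv0|apply: mdvD]. Qed.
Lemma mdv_mulmx n k l (X Y : 'M[R]_n) : mdv k X -> mdv l Y -> mdv (k + l) (X *m Y).
Proof.
move=> hX hY i j; rewrite mxE; apply: dv_sum => t _.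
by rewrite exprD; apply: dvMM.
Qed.
Lemma mdv_mull n k (X Y : 'M[R]_n) : mdv k X -> mdv k (X *m Y).
Proof.
move=> hX i j; rewrite mxE; apply: dv_sum => t _; exact: dvMr.
Qed.
Lemma mdv_mulr n k (X Y : 'M[R]_n) : mdv k Y -> mdv k (X *m Y).
Proof.
move=> hY i j; rewrite mxE; apply: dv_sum => t _; exact: dvMl.
Qed.
Lemma mdv_exp n (T : 'M[R]_n) j : mdv 1 T -> mdv j (T ^+ j).
Proof.
move=> hT; elim: j => [|j ih].
  by move=> i l; rewrite expr0; exists (1%:M i l); rewrite mul1r.
by rewrite exprS -mulmxE -add1n; apply: mdv_mulmx.
Qed.
Lemma mdv_tr n k (X : 'M[R]_n) : mdv k X -> mdv k X^T.
Proof. by move=> h i j; rewrite mxE. Qed.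

Lemma mdv_all_eq0 n (X : 'M[R]_n) : (forall k, mdv k X) -> X = 0.
Proof. by move=> h; apply/matrixP => i j; rewrite mxE; apply: sep => k; apply: h. Qed.

Definition mlim n (s : nat -> 'M[R]_n) L :=
  forall k, exists N, forall m, (N <= m)%N -> mdv k (s m - L).

Lemma mlimP n (s : nat -> 'M[R]_n) L : padic_lim_mx p s L -> mlim s L.
Proof.
move=> h k.
pose Nf i j := epsilon (inhabits 0%N) (fun N => forall m, (N <= m)%N -> dv (P ^+ k) (s m i j - L i j)).
have hN : forall i j m, (Nf i j <= m)%N -> dv (P ^+ k) (s m i j - L i j).
  move=> i j; apply: (epsilon_spec (inhabits 0%N) (fun N => forall m, (N <= m)%N -> dv (P ^+ k) (s m i j - L i j))).
  exact: (h i j k).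
exists (\max_i \max_j Nf i j) => m hm i j; rewrite !mxE; apply: hN.
apply: leq_trans hm; apply: leq_trans (leq_bigmax i).
exact: (leq_bigmax j).
Qed.

Lemma mlim_padic n (s : nat -> 'M[R]_n) L : mlim s L -> padic_lim_mx p s L.
Proof.
move=> h i j k; have [N hN] := h k; exists N => m hm.
by have := hN m hm i j; rewrite !mxE.
Qed.

Lemma mlim_unique n (s : nat -> 'M[R]_n) L L' : mlim s L -> mlim s L' -> L = L'.
Proof.
move=> h h'; apply/eqP; rewrite -subr_eq0; apply/eqP; apply: mdv_all_eq0 => k.
have [N hN] := h k; have [N' hN'] := h' k.
have -> : L - L' = (s (maxn N N') - L') - (s (maxn N N') - L) by rewrite (zsub3 (s (maxn N N'))).
by apply: mdvB; [apply: hN'; rewrite leq_maxr|apply: hN; rewrite leq_maxl].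
Qed.

Lemma mcauchy_lim n (s : nat -> 'M[R]_n) :
  (forall k, exists N, forall m m', (N <= m)%N -> (N <= m')%N -> mdv k (s m - s m')) ->
  exists L, mlim s L.
Proof.
move=> h.
have hc : forall i j, exists l, padic_lim p (fun m => s m i j) l.
  move=> i j; apply: (complete HW) => k; have [N hN] := h k.
  by exists N => m m' hm hm'; have := hN m m' hm hm' i j; rewrite !mxE.
pose L := \matrix_(i, j) epsilon (inhabits 0) (fun l => padic_lim p (fun m => s m i j) l).
exists L; apply: mlimP => i j; rewrite mxE.
exact: (epsilon_spec (inhabits 0) (fun l => padic_lim p (fun m => s m i j) l) (hc i j)).
Qed.

Lemma ratr1 : ratr 1 = 1 :> R.
Proof. by rewrite /ratr /= divr1. Qed.

Lemma bt_succ n a (Y : 'M[R]_n) m :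
  binom_terms_mx a Y m.+1 = binom_terms_mx a Y m + ratr (binom_coef a m) *: (Y - 1%:M) ^+ m.
Proof. by rewrite /binom_terms_mx big_ord_recr. Qed.

Lemma bt1 n a (Y : 'M[R]_n) : binom_terms_mx a Y 1 = 1.
Proof. by rewrite /binom_terms_mx big_ord1 bc0 ratr1 expr0 scale1r. Qed.

Lemma bt_diff n a (Y : 'M[R]_n) : mdv 1 (Y - 1%:M) ->
  forall k m, (k <= m)%N -> mdv k (binom_terms_mx a Y m - binom_terms_mx a Y k).
Proof.
move=> hT k m /subnKC <-; elim: (m - k)%N => [|d ih].
  by rewrite addn0 subrr; apply: mdv0.
rewrite addnS bt_succ addrAC; apply: mdvD => //.
apply: mdvZ; apply: (@mdv_le _ _ (k + d)); first exact: leq_addr.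
exact: mdv_exp.
Qed.

Lemma bt_lim n a (Y : 'M[R]_n) : mdv 1 (Y - 1%:M) ->
  mlim (binom_terms_mx a Y) (binom_pow_mx p a Y).
Proof.
move=> hT.
have [L hL] : exists L, mlim (binom_terms_mx a Y) L.
  apply: mcauchy_lim => k; exists k => m m' hm hm'.
  rewrite (zsub3 (binom_terms_mx a Y k)).
  by apply: mdvB; rewrite -opprB; apply: mdvN; apply: bt_diff.
apply: mlimP; rewrite /binom_pow_mx.
apply: (epsilon_spec (inhabits 0) (fun L => padic_lim_mx p (binom_terms_mx a Y) L)).
by exists L; apply: mlim_padic.
Qed.

Lemma bp_sub1 n a (Y : 'M[R]_n) : mdv 1 (Y - 1%:M) -> mdv 1 (binom_pow_mx p a Y - 1).
Proof.
move=> hT; have [N hN] := bt_lim a hT 1.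
set m := maxn N 1.
have -> : binom_pow_mx p a Y - 1 =
   (binom_terms_mx a Y m - binom_terms_mx a Y 1) - (binom_terms_mx a Y m - binom_pow_mx p a Y).
  by rewrite bt1 -zsub3.
apply: mdvB; first by apply: bt_diff => //; rewrite /m leq_maxr.
by apply: hN; rewrite /m leq_maxl.
Qed.

Lemma bt_horner n a (Y : 'M[R]_n.+1) m :
  binom_terms_mx a Y m = horner_mx (Y - 1%:M) (\poly_(j < m) ratr (binom_coef a j)).
Proof.
rewrite poly_def linear_sum /=; apply: eq_bigr => j _.
by rewrite linearZ /= rmorphXn /= horner_mx_X.
Qed.

Lemma bt_prod n a b (Y : 'M[R]_n) m : good a -> good b -> mdv 1 (Y - 1%:M) ->
  mdv m (binom_terms_mx a Y m * binom_terms_mx b Y m - binom_terms_mx (a + b) Y m).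
Proof.
move: Y; case: n => [|n] Y ga gb hT.
  by move=> i; case: i => [[]].
rewrite !bt_horner.
set Pa := \poly_(j < m) _; set Pb := \poly_(j < m) _; set Pab := \poly_(j < m) _.
have hq : take_poly m (Pa * Pb - Pab) = 0.
  apply/polyP => i; rewrite coef_take_poly coef0; case: ltnP => // him.
  rewrite coefB coefM /Pab coef_poly him vandermonde.
  have [g e] := @good_sum _ (index_enum 'I_i.+1) predT
     (fun j : 'I_i.+1 => binom_coef a j * binom_coef b (i - j))
     (fun j _ => (good_mul (good_binom j ga) (good_binom (i - j) gb)).1).
  rewrite e; apply/eqP; rewrite subr_eq0; apply/eqP; apply: eq_bigr => j _.
  have hj : (j < m)%N by apply: leq_ltn_trans him; rewrite -ltnS ltn_ord.
  have hij : (i - j < m)%N by apply: leq_ltn_trans him; apply: leq_subr.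
  rewrite /Pa /Pb !coef_poly hj hij.
  by rewrite (good_mul (good_binom j ga) (good_binom (i - j) gb)).2.
have e : Pa * Pb - Pab = drop_poly m (Pa * Pb - Pab) * 'X^m.
  by have := poly_take_drop m (Pa * Pb - Pab); rewrite hq add0r.
rewrite -rmorphM -rmorphB e rmorphM /= rmorphXn /= horner_mx_X.
by rewrite -mulmxE; apply: mdv_mulr; apply: mdv_exp.
Qed.

Lemma bp_mul n a b (Y : 'M[R]_n) : good a -> good b -> mdv 1 (Y - 1%:M) ->
  binom_pow_mx p a Y * binom_pow_mx p b Y = binom_pow_mx p (a + b) Y.
Proof.
move=> ga gb hT; apply/eqP; rewrite -subr_eq0; apply/eqP; apply: mdv_all_eq0 => k.
have [N1 h1] := bt_lim a hT k; have [N2 h2] := bt_lim b hT k.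
have [N3 h3] := bt_lim (a + b) hT k.
set m := maxn (maxn N1 N2) (maxn N3 k).
have m1 : (N1 <= m)%N by rewrite /m !leq_max leqnn.
have m2 : (N2 <= m)%N by rewrite /m !leq_max leqnn orbT.
have m3 : (N3 <= m)%N by rewrite /m !leq_max leqnn orbT.
have m4 : (k <= m)%N by rewrite /m !leq_max leqnn !orbT.
set Sa := binom_terms_mx a Y m; set Sb := binom_terms_mx b Y m.
set Sab := binom_terms_mx (a + b) Y m.
set La := binom_pow_mx p a Y; set Lb := binom_pow_mx p b Y; set Lab := binom_pow_mx p (a + b) Y.
have -> : La * Lb - Lab = - ((Sa - La) * Lb) - Sa * (Sb - Lb) + (Sa * Sb - Sab) + (Sab - Lab).
  by rewrite mulrBl mulrBr !opprB !tele.
apply: mdvD; last by apply: h3.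
apply: mdvD; last by apply: (mdv_le m4); apply: bt_prod.
apply: mdvB; first by apply: mdvN; rewrite -mulmxE; apply: mdv_mull; apply: h1.
by rewrite -mulmxE; apply: mdv_mulr; apply: h2.
Qed.

Lemma ratr0 : ratr 0 = 0 :> R.
Proof. by rewrite /ratr /= mul0r. Qed.

Lemma bc1_ge2 j : binom_coef 1 j.+2 = 0.
Proof. by rewrite /binom_coef big_ord_recl big_ord_recl /= /bump /= mulr1n subrr mul0r mulr0 mul0r. Qed.
Lemma bc11 : binom_coef 1 1 = 1.
Proof. by rewrite /binom_coef big_ord1 subr0 divr1. Qed.
Lemma bc0_ge1 j : binom_coef 0 j.+1 = 0.
Proof. by rewrite /binom_coef big_ord_recl /= subrr mul0r mul0r. Qed.

Lemma mlim_ev n (s : nat -> 'M[R]_n) L N : (forall m, (N <= m)%N -> s m = L) -> mlim s L.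
Proof. by move=> h k; exists N => m hm; rewrite h // subrr; apply: mdv0. Qed.

Lemma bp1 n (Y : 'M[R]_n) : mdv 1 (Y - 1%:M) -> binom_pow_mx p 1 Y = Y.
Proof.
move=> hT; apply: (mlim_unique (bt_lim 1 hT)); apply: (@mlim_ev _ _ _ 2) => m.
case: m => [|[|m]] //= _; elim: m => [|m ih].
  rewrite bt_succ bt1 bc11 ratr1 scale1r expr1; exact: subrKC.
by rewrite bt_succ ih bc1_ge2 ratr0 scale0r addr0.
Qed.

Lemma bp0 n (Y : 'M[R]_n) : mdv 1 (Y - 1%:M) -> binom_pow_mx p 0 Y = 1.
Proof.
move=> hT; apply: (mlim_unique (bt_lim 0 hT)); apply: (@mlim_ev _ _ _ 1) => m.
case: m => [|m] //= _; elim: m => [|m ih]; first exact: bt1.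
by rewrite bt_succ ih bc0_ge1 ratr0 scale0r addr0.
Qed.

Lemma bp_tr n a (Y A : 'M[R]_n) : mdv 1 (Y - 1%:M) ->
  (Y - 1%:M)^T *m A = A *m (Y - 1%:M) ->
  (binom_pow_mx p a Y)^T *m A = A *m binom_pow_mx p a Y.
Proof.
move=> hT hc; set T := Y - 1%:M in hT hc.
have hX : forall j, (T ^+ j)^T *m A = A *m T ^+ j.
  elim=> [|j ih]; first by rewrite expr0 trmx1 mul1mx mulmx1.
  by rewrite exprS -mulmxE trmx_mul -mulmxA hc mulmxA ih -mulmxA !mulmxE -exprSr exprS.
have hS : forall m, (binom_terms_mx a Y m)^T *m A = A *m binom_terms_mx a Y m.
  move=> m; rewrite /binom_terms_mx linear_sum /= mulmx_suml mulmx_sumr.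
  by apply: eq_bigr => j _; rewrite linearZ /= -scalemxAl -scalemxAr hX.
apply/eqP; rewrite -subr_eq0; apply/eqP; apply: mdv_all_eq0 => k.
have [N hN] := bt_lim a hT k.
set S := binom_terms_mx a Y N; set L := binom_pow_mx p a Y.
have -> : L^T *m A - A *m L = - ((S - L)^T *m A) + A *m (S - L).
  rewrite linearB /= mulmxBl mulmxBr hS opprB.
  by rewrite addrA subrK.
apply: mdvD; first by apply: mdvN; apply: mdv_mull; apply: mdv_tr; apply: hN.
by apply: mdv_mulr; apply: hN.
Qed.

Lemma bt_scalar a (y : R) m :
  binom_terms_mx a (y%:M : 'M_1) m = (binom_terms a y m)%:M.
Proof.
rewrite /binom_terms_mx /binom_terms raddf_sum /=; apply: eq_bigr => j _.
by rewrite -scale_scalar_mx -raddfB /= rmorphXn.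
Qed.

Lemma plim_unique (s : nat -> R) l l' : padic_lim p s l -> padic_lim p s l' -> l = l'.
Proof.
move=> h h'; apply/eqP; rewrite -subr_eq0; apply/eqP; apply: sep => k.
have [N hN] := h k; have [N' hN'] := h' k.
rewrite (zsub3 (s (maxn N N'))).
by apply: dvB; [apply: hN'; rewrite leq_maxr|apply: hN; rewrite leq_maxl].
Qed.

Lemma bp_scalar a (y : R) : dv P (y - 1) ->
  binom_pow p a y = binom_pow_mx p a (y%:M : 'M_1) 0 0.
Proof.
move=> hy.
have hT : mdv 1 ((y%:M : 'M_1) - 1%:M).
  by move=> i j; rewrite -raddfB /= mxE; case: (i == j); [rewrite mulr1n|rewrite mulr0n; apply: dv0].
have hl : padic_lim p (binom_terms a y) (binom_pow_mx p a (y%:M : 'M_1) 0 0).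
  move=> k; have [N hN] := bt_lim a hT k; exists N => m hm.
  by have := hN m hm 0 0; rewrite bt_scalar !mxE eqxx mulr1n.
apply: (plim_unique _ hl); rewrite /binom_pow.
by apply: (epsilon_spec (inhabits 0) (fun L => padic_lim p (binom_terms a y) L)); exists (binom_pow_mx p a (y%:M : 'M_1) 0 0).
Qed.

Lemma bp_pow n a (Y : 'M[R]_n) k : good a -> mdv 1 (Y - 1%:M) ->
  binom_pow_mx p a Y ^+ k = binom_pow_mx p (k%:R * a) Y.
Proof.
move=> ga hT; elim: k => [|k ih]; first by rewrite expr0 mul0r bp0.
have gk : good (k%:R : rat) by have := good_int k; rewrite -pmulrn.
rewrite exprSr ih bp_mul //; first by rewrite -natr1 mulrDl mul1r.
exact: (good_mul gk ga).1.
Qed.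

Lemma mdv_scalar1 (y : R) : dv P (y - 1) -> mdv 1 ((y%:M : 'M_1) - 1%:M).
Proof.
by move=> hy i j; rewrite -raddfB /= mxE; case: (i == j); [rewrite mulr1n|rewrite mulr0n; apply: dv0].
Qed.

Lemma good_invn n : ~~ (p %| n)%N -> good (- (n%:Q)^-1).
Proof.
move=> hn.
have n0 : (n%:Q) != 0 by rewrite intr_eq0; apply/eqP => [[e]]; move: hn; rewrite e dvdn0.
have := @ratr_frac (- (n%:Q)^-1) (-1) n hn.
by case => //; rewrite mulNr mulVf.
Qed.

Lemma detPhiSL n (x : 'M[R]_n) : ~~ (p %| n)%N -> x \in unitmx ->
  \det (PhiSL p x) = \det x ^+ p.
Proof.
move=> hn ux; rewrite unitmxE in ux.
set F := frobp p x; set dx := \det x.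
have udx : dx ^+ p \is a GRing.unit by rewrite unitrX.
set y := \det F / dx ^+ p.
have hy : dv P (y - 1).
  have -> : y - 1 = (\det F - dx ^+ p) * (dx ^+ p)^-1 by rewrite mulrBl divrr.
  by apply: dvMr; apply: frob_det.
set a := - (n%:Q)^-1.
have ga := good_invn hn.
have hT := mdv_scalar1 hy.
set Y := (y%:M : 'M_1).
set L := binom_pow_mx p a Y.
have el : lambdaSL p x = L 0 0 by rewrite /lambdaSL -/F -/dx -/y -/a bp_scalar.
have hl1 : dv P (lambdaSL p x - 1).
  by rewrite el; have := bp_sub1 a hT 0 0; rewrite !mxE eqxx mulr1n.
have hln : lambdaSL p x ^+ n * y = 1.
  have n0 : (n%:R : rat) != 0 by rewrite pnatr_eq0; apply/eqP => e; move: hn; rewrite e dvdn0.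
  have e1 : L ^+ n * Y = 1.
    rewrite /L bp_pow // -[Y in _ * Y](bp1 hT).
    have -> : n%:R * a = -1 by rewrite /a mulrN mulfV.
    rewrite bp_mul //; last by apply: (good_int 1).
      by rewrite addNr bp0.
    by apply: (good_int (-1)).
  move: e1; rewrite (mx11_scalar L) -rmorphXn /= /Y -mulmxE -scalar_mxM.
  move=> /(congr1 (fun M : 'M_1 => M 0 0)); rewrite !mxE eqxx !mulr1n.
  by rewrite el.
have ePhi : PhiSL p x = lambdaSL p x *: F.
  rewrite /PhiSL /DeltaSL -/F scalerA -(divpP hl1).
  by rewrite -{1}[F]scale1r -scalerDl addrC subrK.
rewrite ePhi detZ.
have -> : \det F = y * dx ^+ p by rewrite divrK.
by rewrite mulrA hln mul1r.
Qed.

Lemma frob_mul n (X Y : 'M[R]_n) : mdv 1 (frobp p (X *m Y) - frobp p X *m frobp p Y).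
Proof.
move=> i j; rewrite !mxE expr1.
have -> : \sum_k frobp p X i k * frobp p Y k j = \sum_k (X i k * Y k j) ^+ p.
  by apply: eq_bigr => k _; rewrite !mxE exprMn.
exact: frob_sum.
Qed.

Lemma frob_tr n (X : 'M[R]_n) : frobp p X^T = (frobp p X)^T.
Proof. by apply/matrixP => i j; rewrite !mxE. Qed.

Lemma frobZ n c (X : 'M[R]_n) : frobp p (c *: X) = c ^+ p *: frobp p X.
Proof. by apply/matrixP => i j; rewrite !mxE exprMn. Qed.

Lemma frob_unit n (x : 'M[R]_n) : x \in unitmx -> frobp p x \in unitmx.
Proof.
rewrite !unitmxE => ux; apply: (unit_dvP (a := \det x ^+ p)); first by rewrite unitrX.
exact: frob_det.
Qed.

Lemma sign_pow (e : R) : e * e = 1 -> e ^+ p = e.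
Proof.
move=> he; rewrite -[p]odd_double_half podd add1n exprS -mul2n exprM expr2 he.
by rewrite expr1n mulr1.
Qed.

Section SOform.
Variables (n : nat) (q : 'M[R]_n) (e : R).
Hypothesis hqu : q \in unitmx.
Hypothesis hqT : q^T = e *: q.
Hypothesis he : e * e = 1.
Hypothesis hqf : frobp p q = q.

Lemma PhiSO_form (x : 'M[R]_n) : x \in unitmx ->
  (PhiSO p q x)^T *m q *m PhiSO p q x = frobp p (x^T *m q *m x).
Proof.
move=> ux.
set F := frobp p x; set A := F^T *m q *m F; set B := frobp p (x^T *m q *m x).
have uF : F \in unitmx by apply: frob_unit.
have uA : A \in unitmx by rewrite !unitmx_mul unitmx_tr uF hqu.
have hBA : mdv 1 (B - A).
  have -> : B - A = (B - frobp p (x^T *m q) *m F) + (frobp p (x^T *m q) - F^T *m q) *m F.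
    by rewrite mulmxBl /A tele.
  apply: mdvD; first exact: frob_mul.
  by apply: mdv_mull; have := frob_mul x^T q; rewrite hqf frob_tr.
set M := invmx A *m B.
have eT : M - 1%:M = invmx A *m (B - A) by rewrite mulmxBr mulVmx.
have hT : mdv 1 (M - 1%:M) by rewrite eT; apply: mdv_mulr.
have eL : LambdaSO p q x = binom_pow_mx p (1 / 2%:R) M by [].
set L := binom_pow_mx p (1 / 2%:R) M.
have g2 : good (1 / 2%:R).
  have h2 : ~~ (p %| `|2%:Z|)%N.
    apply/negP => /(@dvdn_leq p 2 isT) hp.
    have p2 : p = 2%N by apply/eqP; rewrite eqn_leq hp prime_gt1 ?pprime.
    by move: podd; rewrite p2.
  by case: (@ratr_frac (1 / 2%:R) 1 2 h2) => //; rewrite mul1r mulVf.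
have hL1 : mdv 1 (L - 1) := bp_sub1 (1 / 2%:R) hT.
have eLL : L * L = M.
  rewrite /L bp_mul //.
  have -> : 1 / 2%:R + 1 / 2%:R = (1 : rat) by rewrite -splitr.
  exact: bp1.
have eA : A^T = e *: A.
  by rewrite /A !trmx_mul trmxK hqT -scalemxAl -scalemxAr mulmxA.
have eB : B^T = e *: B.
  by rewrite /B -frob_tr !trmx_mul trmxK hqT -!scalemxAl -!scalemxAr mulmxA frobZ sign_pow.
have ue : e \is a GRing.unit by apply/unitrPr; exists e.
have hMA : M^T *m A = B.
  rewrite /M trmx_mul trmx_inv eA eB invmxZ; last by rewrite -eA unitmx_tr.
  rewrite -!scalemxAl -scalemxAr -scalemxAl scalerA mulrV // scale1r -mulmxA mulVmx //.
  by rewrite mulmx1.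
have hcomm : (M - 1%:M)^T *m A = A *m (M - 1%:M).
  by rewrite linearB /= trmx1 mulmxBl mulmxBr hMA mulmx1 mul1mx /M mulmxA mulmxV // mul1mx.
have hLA : L^T *m A = A *m L by apply: bp_tr.
have ePhi : PhiSO p q x = F *m L.
  rewrite /PhiSO /DeltaSO -/F eL -/L  scalemxAr.
  have -> : p%:R *: map_mx (divP p) (L - 1%:M) = L - 1%:M.
    apply/matrixP => i j; rewrite !mxE -divpP //.
    by have := hL1 i j; rewrite !mxE expr1.
  by rewrite mulmxBr mulmx1 addrC subrK.
rewrite ePhi.
have -> : (F *m L)^T *m q *m (F *m L) = L^T *m A *m L by rewrite trmx_mul /A !mulmxA.
have eLL' : L *m L = M by rewrite mulmxE eLL.
rewrite hLA -mulmxA eLL' /M mulmxA mulmxV // mul1mx //.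
Qed.

End SOform.

End Basics.

Definition sgnmx (R : pzRingType) n (q : 'M[R]_n) :=
  forall i j, q i j = 0 \/ q i j = 1 \/ q i j = -1.

Lemma sgnmx_map (R : pzRingType) n (q : 'M[R]_n) (f : R -> R) :
  f 0 = 0 -> f 1 = 1 -> f (-1) = -1 -> sgnmx q -> map_mx f q = q.
Proof.
move=> f0 f1 fN h; apply/matrixP => i j; rewrite mxE.
by case: (h i j) => [->|[->|->]].
Qed.

Lemma sgnmx_block (R : pzRingType) m1 m2 (a : 'M[R]_(m1, m1)) (b : 'M[R]_(m1, m2))
  (c : 'M[R]_(m2, m1)) (d : 'M[R]_(m2, m2)) :
  (forall i j, a i j = 0 \/ a i j = 1 \/ a i j = -1) ->
  (forall i j, b i j = 0 \/ b i j = 1 \/ b i j = -1) ->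
  (forall i j, c i j = 0 \/ c i j = 1 \/ c i j = -1) ->
  (forall i j, d i j = 0 \/ d i j = 1 \/ d i j = -1) ->
  sgnmx (block_mx a b c d).
Proof.
move=> ha hb hc hd i j.
case: (split_ordP i) => i' ->; case: (split_ordP j) => j' ->.
- by rewrite block_mxEul.
- by rewrite block_mxEur.
- by rewrite block_mxEdl.
- by rewrite block_mxEdr.
Qed.

Lemma sgn0 (R : pzRingType) m n (i : 'I_m) (j : 'I_n) :
  (0 : 'M[R]_(m, n)) i j = 0 \/ (0 : 'M[R]_(m, n)) i j = 1 \/ (0 : 'M[R]_(m, n)) i j = -1.
Proof. by left; rewrite mxE. Qed.
Lemma sgn1 (R : pzRingType) m (i j : 'I_m) :
  (1%:M : 'M[R]_m) i j = 0 \/ (1%:M : 'M[R]_m) i j = 1 \/ (1%:M : 'M[R]_m) i j = -1.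
Proof. by rewrite mxE; case: (i == j); [right; left|left]. Qed.
Lemma sgnN1 (R : pzRingType) m (i j : 'I_m) :
  (- 1%:M : 'M[R]_m) i j = 0 \/ (- 1%:M : 'M[R]_m) i j = 1 \/ (- 1%:M : 'M[R]_m) i j = -1.
Proof. by rewrite !mxE; case: (i == j); [right; right|left; rewrite oppr0]. Qed.

Lemma sgn_alt (R : idomainType) r : sgnmx (q_alt R r).
Proof. by apply: sgnmx_block => i j; [apply: sgn0|apply: sgn1|apply: sgnN1|apply: sgn0]. Qed.
Lemma sgn_sym (R : idomainType) r : sgnmx (q_sym R r).
Proof. by apply: sgnmx_block => i j; [apply: sgn0|apply: sgn1|apply: sgn1|apply: sgn0]. Qed.
Lemma sgn_odd (R : idomainType) r : sgnmx (q_odd R r).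
Proof. by apply: sgnmx_block => i j; [apply: sgn1|apply: sgn0|apply: sgn0|apply: sgn_sym]. Qed.

Lemma tr_alt (R : idomainType) r : (q_alt R r)^T = (-1) *: q_alt R r.
Proof.
rewrite scaleN1r /q_alt tr_block_mx opp_block_mx !trmx0 trmx1 linearN /= trmx1 oppr0 opprK.
done.
Qed.
Lemma tr_sym (R : idomainType) r : (q_sym R r)^T = 1 *: q_sym R r.
Proof. by rewrite scale1r /q_sym tr_block_mx !trmx0 trmx1. Qed.
Lemma tr_odd (R : idomainType) r : (q_odd R r)^T = 1 *: q_odd R r.
Proof. by rewrite scale1r /q_odd tr_block_mx !trmx0 trmx1 tr_sym scale1r. Qed.

Lemma unit_alt (R : idomainType) r : q_alt R r \in unitmx.
Proof.
suff h : (q_alt R r)^T *m q_alt R r = 1%:M by case: (mulmx1_unit h).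
rewrite tr_alt scaleN1r /q_alt opp_block_mx mulmx_block.
rewrite !(mul0mx, mulmx0, mulNmx, mulmxN, mul1mx, mulmx1, oppr0, opprK, add0r, addr0).
by rewrite -scalar_mx_block.
Qed.
Lemma unit_sym (R : idomainType) r : q_sym R r \in unitmx.
Proof.
suff h : (q_sym R r)^T *m q_sym R r = 1%:M by case: (mulmx1_unit h).
rewrite tr_sym scale1r /q_sym mulmx_block.
rewrite !(mul0mx, mulmx0, mul1mx, mulmx1, add0r, addr0).
by rewrite -scalar_mx_block.
Qed.
Lemma unit_odd (R : idomainType) r : q_odd R r \in unitmx.
Proof.
suff h : (q_odd R r)^T *m q_odd R r = 1%:M by case: (mulmx1_unit h).
have hs : (q_sym R r)^T *m q_sym R r = 1%:M.
  rewrite tr_sym scale1r /q_sym mulmx_block.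
  rewrite !(mul0mx, mulmx0, mul1mx, mulmx1, add0r, addr0).
  by rewrite -scalar_mx_block.
rewrite /q_odd tr_block_mx !trmx0 trmx1 mulmx_block hs.
rewrite !(mul0mx, mulmx0, mul1mx, mulmx1, add0r, addr0).
by rewrite -scalar_mx_block.
Qed.

Lemma SL_final (R : idomainType) (p : nat) (phi : {rmorphism R -> R}) :
  W_setting p phi ->
  forall (n : nat) (u : 'M[R]_n), ~~ (p %| n)%N -> u \in unitmx ->
     forall v : 'M[R]_n, inG (@PhiSL R p n) phi u v ->
       delta p phi (\det v) = 0.
Proof.
move=> HW n u hn uu v [uv ev].
have uX : u *m v \in unitmx by rewrite unitmx_mul uu uv.
have h1 : phi (\det v) = \det v ^+ p.
  rewrite -det_map_mx ev det_mulmx det_inv !(detPhiSL HW) // det_mulmx exprMn mulrA mulVr ?mul1r //.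
  by rewrite unitrX // -unitmxE.
by rewrite /delta h1 subrr (divp0 HW).
Qed.

Lemma SO_final (R : idomainType) (p : nat) (phi : {rmorphism R -> R}) :
  W_setting p phi ->
  forall n (q : 'M[R]_n) e, q \in unitmx -> q^T = e *: q -> e * e = 1 -> sgnmx q ->
  forall u, u^T *m q *m u = q ->
  forall v, inG (PhiSO p q) phi u v -> map_mx (delta p phi) (v^T *m q *m v) = 0.
Proof.
move=> HW n q e hqu hqT he hsq u hu v [uv ev].
have hqf : frobp p q = q.
  apply: sgnmx_map => //; first by rewrite expr0n /= (negPf (lt0n_neq0 (p_gt0 HW))).
    by rewrite expr1n.
  by rewrite (sign_pow HW) // mulrNN mulr1.
have hqp : map_mx phi q = q.
  by apply: sgnmx_map => //; [rewrite rmorph0|rewrite rmorph1|rewrite rmorphN1].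
have unitL : forall w : 'M[R]_n, w^T *m q *m w = q -> w \in unitmx.
  move=> w hw; have : (invmx q *m w^T *m q) *m w = 1%:M.
    by rewrite -!mulmxA (mulmxA w^T) hw mulVmx.
  by case/mulmx1_unit.
have uu : u \in unitmx by apply: unitL.
have uX : u *m v \in unitmx by rewrite unitmx_mul uu uv.
have hPu : (PhiSO p q u)^T *m q *m PhiSO p q u = q.
  by rewrite (PhiSO_form HW hqu hqT he hqf uu) hu.
have uPu : PhiSO p q u \in unitmx by apply: unitL.
have hPX := PhiSO_form HW hqu hqT he hqf uX.
have eW : (u *m v)^T *m q *m (u *m v) = v^T *m q *m v.
  rewrite trmx_mul.
  have -> : v^T *m u^T *m q *m (u *m v) = v^T *m (u^T *m q *m u) *m v by rewrite !mulmxA.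
  by rewrite hu.
set iP := invmx (PhiSO p q u).
have hinv : iP^T *m q *m iP = q.
  rewrite -{1}hPu !mulmxA -trmx_mul /iP mulmxV // trmx1 mul1mx.
  by rewrite -mulmxA mulmxV // mulmx1.
have hW : map_mx phi (v^T *m q *m v) = frobp p (v^T *m q *m v).
  rewrite !map_mxM -map_trmx hqp ev -eW -hPX trmx_mul -/iP.
  have -> : (PhiSO p q (u *m v))^T *m iP^T *m q *m (iP *m PhiSO p q (u *m v)) =
     (PhiSO p q (u *m v))^T *m (iP^T *m q *m iP) *m PhiSO p q (u *m v) by rewrite !mulmxA.
  by rewrite hinv.
apply/matrixP => i j; have := congr1 (fun M : 'M[R]_n => M i j) hW; rewrite !mxE => h.
by rewrite /delta h subrr (divp0 HW).
Qed.

Theorem proposition3p6 (R : idomainType) (p : nat) (phi : {rmorphism R -> R}) :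
  W_setting p phi ->
  (* 1) type SL_n *)
  (forall (n : nat) (u : 'M[R]_n), ~~ (p %| n)%N -> u \in unitmx ->
     forall v : 'M[R]_n, inG (@PhiSL R p n) phi u v ->
       delta p phi (\det v) = 0)
  (* 2) type SO(q), q alternating, n = 2r (SO(q) = {x^t q x = q}) *)
  /\ (forall (r : nat) (u : 'M[R]_(r + r)),
       u^T *m q_alt R r *m u = q_alt R r ->
       forall v : 'M[R]_(r + r), inG (PhiSO p (q_alt R r)) phi u v ->
         map_mx (delta p phi) (v^T *m q_alt R r *m v) = 0)
  (* 2) type SO(q), q split symmetric, n = 2r *)
  /\ (forall (r : nat) (u : 'M[R]_(r + r)),
       u^T *m q_sym R r *m u = q_sym R r -> \det u = 1 ->
       forall v : 'M[R]_(r + r), inG (PhiSO p (q_sym R r)) phi u v ->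
         map_mx (delta p phi) (v^T *m q_sym R r *m v) = 0)
  (* 2) type SO(q), q split symmetric, n = 2r+1 *)
  /\ (forall (r : nat) (u : 'M[R]_(1 + (r + r))),
       u^T *m q_odd R r *m u = q_odd R r -> \det u = 1 ->
       forall v : 'M[R]_(1 + (r + r)), inG (PhiSO p (q_odd R r)) phi u v ->
         map_mx (delta p phi) (v^T *m q_odd R r *m v) = 0).
Proof.
move=> HW; split; first exact: (SL_final HW).
split.
  move=> r u hu v hv.
  have h1 : (-1 : R) * -1 = 1 by rewrite mulrNN mulr1.
  have := SO_final HW (@unit_alt R r) (@tr_alt R r) h1 (@sgn_alt R r) hu hv.
  done.
split.
  move=> r u hu _ v hv.
  exact: (SO_final HW (@unit_sym R r) (@tr_sym R r) (mulr1 1) (@sgn_sym R r) hu hv).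
move=> r u hu _ v hv.
exact: (SO_final HW (@unit_odd R r) (@tr_odd R r) (mulr1 1) (@sgn_odd R r) hu hv).
Qed.
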